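(* Let $a,b,k$ be positive integers. There exists an integer $N=N(a,b,k)$ such that for every $n\ge N$, BoxWaiter has a winning strategy in the game $WCBox(n\times k,(a:b))$.
   Context: $WCBox(n\times k,(a:b))$ is the $(a:b)$ Waiter-Client game whose board is the disjoint union of $n$ sets (''boxes'') of size $k$ each and whose target sets are the boxes: in each round BoxWaiter selects $a+b$ unclaimed elements, BoxClient claims $a$ of them and BoxWaiter the rest (in the last round, if $t$ elements remain, BoxWaiter takes all if $t\le b$, otherwise BoxClient takes $t-b$ and BoxWaiter the rest). BoxWaiter wins if by the end BoxClient has claimed all elements of some box; otherwise BoxClient wins. *)

(* Defs.v *)
From mathcomp Require Import all_boot.
Set Implicit Arguments. Unset Strict Implicit. Unset Printing Implicit Defensive.

(* Board of WCBox(n x k, (a:b)): element (i, j) is the j-th element of box i. *)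
Definition box_board (n k : nat) : finType := ('I_n * 'I_k)%type.

Definition box (n k : nat) (i : 'I_n) : {set box_board n k} :=
  [set x : box_board n k | x.1 == i].

(* BoxWaiter wins (has a winning strategy) from the position where U is the set
   of unclaimed elements and C is the set of elements claimed by BoxClient.
   The inductive predicate is the least fixpoint, i.e. Waiter forces a win in
   the (finite) game. *)
Inductive waiter_wins (n k a b : nat) :
    {set box_board n k} -> {set box_board n k} -> Prop :=
| ww_end (C : {set box_board n k}) :
    (exists i : 'I_n, box k i \subset C) -> waiter_wins a b set0 C
| ww_round (U C : {set box_board n k}) :
    a + b <= #|U| ->
    (exists S : {set box_board n k},
        [/\ S \subset U, #|S| = a + b &
          forall A : {set box_board n k}, A \subset S -> #|A| = a ->
            waiter_wins a b (U :\: S) (C :|: A)]) ->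
    waiter_wins a b U C
| ww_last_waiter (U C : {set box_board n k}) :
    0 < #|U| -> #|U| < a + b -> #|U| <= b ->
    waiter_wins a b set0 C ->
    waiter_wins a b U C
| ww_last_client (U C : {set box_board n k}) :
    0 < #|U| -> #|U| < a + b -> b < #|U| ->
    (forall A : {set box_board n k}, A \subset U -> #|A| = #|U| - b ->
        waiter_wins a b set0 (C :|: A)) ->
    waiter_wins a b U C.

Definition BoxWaiter_wins (n k a b : nat) : Prop :=
  waiter_wins a b [set: box_board n k] set0.

(* Main.v *)
Require Import Defs.
From mathcomp Require Import all_boot.
From mathcomp Require Import zify.

Set Implicit Arguments. Unset Strict Implicit. Unset Printing Implicit Defensive.

Lemma sub_card (T : finType) (A : {set T}) m :
  m <= #|A| -> exists S : {set T}, S \subset A /\ #|S| = m.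
Proof.
move/card_geqP=> [s [us ss sA]].
exists [set x in s]; split.
  by apply/subsetP=> x; rewrite inE; apply: sA.
by rewrite cardsE (card_uniqP us).
Qed.

Lemma finish n k a b (C : {set box_board n k}) :
  0 < a -> (exists i : 'I_n, box k i \subset C) ->
  forall U, waiter_wins a b U C.
Proof.
move=> a0 hC U.
have [m] := ubnP #|U|; elim: m U C hC => // m IH U C hC hm.
case: (posnP #|U|) => [/eqP|Upos].
  by rewrite cards_eq0 => /eqP ->; apply: ww_end.
case: (leqP (a + b) #|U|) => hab.
  apply: ww_round => //.
  have [S [SU cS]] := sub_card hab.
  exists S; split => // A AS cA; apply: IH.
    case: hC => i hi; exists i; apply: subset_trans hi _; exact: subsetUl.
  rewrite cardsDS //; lia.
case: (leqP #|U| b) => hb.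
  by apply: ww_last_waiter => //; apply: ww_end.
apply: ww_last_client => // A _ _; apply: ww_end.
case: hC => i hi; exists i; apply: subset_trans hi _; exact: subsetUl.
Qed.

Definition good n k (U C : {set box_board n k}) (j : nat) (i : 'I_n) :=
  forall j' : 'I_k, (j' < j -> (i, j') \in C) /\ (j <= j' -> (i, j') \in U).

Lemma stage n k a b : 0 < a -> forall m j, j + m = k ->
  forall (U C : {set box_board n k}) (I : {set 'I_n}),
  (a + b) ^ m <= #|I| -> (forall i, i \in I -> good U C j i) ->
  waiter_wins a b U C.
Proof.
move=> a0; elim=> [|m IHm] j hj U C I hI hg.
  rewrite expn0 card_gt0 in hI; case/set0Pn: hI => i iI.
  apply: finish => //; exists i; apply/subsetP => x; rewrite inE => /eqP hx.
  case: x hx => i' j' /= ->; have [h _] := hg i iI j'; apply: h; have := ltn_ord j'; lia.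
have jk : j < k by lia.
pose jo := Ordinal jk.
suff Q : forall t (U C : {set box_board n k}) (I I' : {set 'I_n}),
  [disjoint I & I'] -> (a + b) * t <= #|I| -> (a + b) ^ m <= #|I'| + t ->
  (forall i, i \in I -> good U C j i) -> (forall i, i \in I' -> good U C j.+1 i) ->
  waiter_wins a b U C.
  apply: (Q ((a + b) ^ m) U C I set0) => //.
  - by rewrite -setI_eq0 setI0.
  - by rewrite -expnS.
  - by rewrite cards0.
  - by move=> i; rewrite inE.
elim=> [|t IHt] U' C' I0 I' dI hI0 hI' g0 g'.
  have hj' : j.+1 + m = k by lia.
  by apply: (IHm j.+1 hj' U' C' I') => //; rewrite addn0 in hI'.
have [T [TI cT]] : exists T : {set 'I_n}, T \subset I0 /\ #|T| = a + b.
  apply: (@sub_card _ I0 (a + b)); rewrite mulnS in hI0; lia.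
pose S := [set (i, jo) | i in T].
have cS : #|S| = a + b by rewrite card_imset // => x y [].
have SU : S \subset U'.
  apply/subsetP => x /imsetP [i iT ->].
  have [_ h] := g0 i (subsetP TI i iT) jo; exact: h.
apply: ww_round; first by rewrite -cS; exact: subset_leq_card.
exists S; split => // A AS cA.
have : 0 < #|A| by rewrite cA.
rewrite card_gt0 => /set0Pn [x xA].
have /imsetP [i0 i0T hx] := subsetP AS x xA.
have i0I : i0 \in I0 := subsetP TI i0 i0T.
have i0I' : i0 \notin I'.
  by apply/negP => h; move: dI; rewrite disjoint_subset => /subsetP /(_ i0 i0I); rewrite inE h.
have notS : forall i (j' : 'I_k), (i, j') \in S -> i \in T.
  by move=> i j' /imsetP [i' i'T [-> _]].
apply: (IHt _ _ (I0 :\: T) (i0 |: I')).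
- rewrite disjoint_subset; apply/subsetP => i; rewrite !inE => /andP [iT iI].
  rewrite negb_or; apply/andP; split.
    by apply/eqP => e; move: iT; rewrite e i0T.
  by move: dI; rewrite disjoint_subset => /subsetP /(_ i iI); rewrite inE.
- rewrite cardsDS // cT; rewrite mulnS in hI0; lia.
- rewrite cardsU1 i0I'; lia.
- move=> i; rewrite inE => /andP [iT iI] j'; have [h1 h2] := g0 i iI j'; split.
    by move=> h; rewrite inE h1.
  move=> h; rewrite inE h2 // andbT; apply/negP => /notS; exact/negP.
- move=> i; rewrite !inE => /orP [/eqP -> | iI'] j'.
    have [h1 h2] := g0 i0 i0I j'; split.
      move=> h; rewrite inE; case: (ltnP j' j) => hl; first by rewrite h1.
      have e : j' = jo by apply: val_inj => /=; lia.
      by rewrite e -hx xA orbT.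
    move=> h; rewrite inE h2 ?andbT; last by lia.
    apply/negP => /imsetP [i' _ [_ e]]; move: h; rewrite e /=; lia.
  have [h1 h2] := g' i iI' j'; split.
    by move=> h; rewrite inE h1.
  move=> h; rewrite inE h2 // andbT; apply/negP => /notS iT.
  by move: dI; rewrite disjoint_subset => /subsetP /(_ i (subsetP TI i iT)); rewrite inE iI'.
Qed.

Theorem mainTheorem17 (a b k : nat) :
  0 < a -> 0 < b -> 0 < k ->
  exists N : nat, forall n : nat, N <= n -> BoxWaiter_wins n k a b.
Proof.
move=> a0 b0 k0; exists ((a + b) ^ k) => n hn.
apply: (@stage n k a b a0 k 0 (add0n k) [set: box_board n k] set0 [set: 'I_n]).
  by rewrite cardsT card_ord.
move=> i _ j'; split => [h | _]; first by [].
exact: in_setT.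
Qed.
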